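(* The class of left depth two extensions is Morita invariant, and the class of right depth two extensions is Morita invariant: if $A/B$ is left (resp. right) depth two and $A/B$ is Morita equivalent to $A'/B'$, then $A'/B'$ is left (resp. right) depth two.
   Context: All rings have identity, subrings contain the identity, modules are unital; a ring extension $A/B$ means $B$ is a subring of $A$. For bimodules ${}_RX_{T}$, ${}_RY_{T}$, write $X\mid Y$ if $X$ is isomorphic (as $R$-$T$-bimodule) to a direct summand of a finite direct sum of copies of $Y$, and $X\sim Y$ if $X\mid Y$ and $Y\mid X$. $A/B$ is left depth two if ${}_BA\otimes_BA_A\mid{}_BA_A$, and right depth two if ${}_AA\otimes_BA_B\mid{}_AA_B$. $\mathrm{End}^r({}_AM)$ denotes the ring of left $A$-endomorphisms of $M$ acting on the right. A bimodule ${}_AM_{A'}$ is a Morita module if ${}_AM\sim{}_AA$ and $\mathrm{End}^r({}_AM)=A'$. Ring extensions $A/B$ and $A'/B'$ are Morita equivalent if there exist Morita modules ${}_AM_{A'}$ and ${}_BN_{B'}$ with ${}_AA\otimes_BN_{B'}\cong{}_AM_{B'}$. A class $\mathscr C$ is Morita invariant if whenever $A/B\in\mathscr C$ and $A/B$ is Morita equivalent to $A'/B'$, then $A'/B'\in\mathscr C$. *)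

(* Defs.v *)
From HB Require Import structures.
From mathcomp Require Import all_boot all_order all_algebra.
Set Implicit Arguments. Unset Strict Implicit. Unset Printing Implicit Defensive.
Import GRing.Theory.
Local Open Scope ring_scope.

Record bimod (R T : pzRingType) := Bimod {
  bm_car :> zmodType;
  bm_l : R -> bm_car -> bm_car;
  bm_r : bm_car -> T -> bm_car;
  bm_lD : forall r x y, bm_l r (x + y) = bm_l r x + bm_l r y;
  bm_Dl : forall r s x, bm_l (r + s) x = bm_l r x + bm_l s x;
  bm_lM : forall r s x, bm_l (r * s) x = bm_l r (bm_l s x);
  bm_l1 : forall x, bm_l 1 x = x;
  bm_rD : forall x y t, bm_r (x + y) t = bm_r x t + bm_r y t;
  bm_Dr : forall x t u, bm_r x (t + u) = bm_r x t + bm_r x u;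
  bm_rM : forall x t u, bm_r x (t * u) = bm_r (bm_r x t) u;
  bm_r1 : forall x, bm_r x 1 = x;
  bm_lr : forall r x t, bm_l r (bm_r x t) = bm_r (bm_l r x) t
}.

Definition bihom (R T : pzRingType) (X Y : bimod R T) (f : X -> Y) : Prop :=
  [/\ forall x y, f (x + y) = f x + f y,
      forall r x, f (bm_l r x) = bm_l r (f x)
    & forall x t, f (bm_r x t) = bm_r (f x) t].

Definition bm_iso (R T : pzRingType) (X Y : bimod R T) : Prop :=
  exists f : X -> Y, bihom f /\ bijective f.

(* X | Y : X is isomorphic to a direct summand of Y^n for some n, i.e. there
   are bimodule maps f_i : X -> Y, g_i : Y -> X (i < n) with
   sum_i g_i o f_i = id_X  (the components of a split mono X -> Y^n). *)
Definition bm_div (R T : pzRingType) (X Y : bimod R T) : Prop :=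
  exists n (f : 'I_n -> X -> Y) (g : 'I_n -> Y -> X),
    [/\ forall i, bihom (f i), forall i, bihom (g i)
      & forall x, \sum_(i < n) g i (f i x) = x].

Definition bm_sim (R T : pzRingType) (X Y : bimod R T) : Prop :=
  bm_div X Y /\ bm_div Y X.

Section Reg.
Variables (R S T : pzRingType) (phi : {rmorphism R -> S}) (psi : {rmorphism T -> S}).
Definition regbm : bimod R T.
Proof.
refine (@Bimod R T S (fun r s => phi r * s) (fun s t => s * psi t)
  _ _ _ _ _ _ _ _ _).
- by move=> r x y; rewrite mulrDr.
- by move=> r s x; rewrite rmorphD mulrDl.
- by move=> r s x; rewrite rmorphM mulrA.
- by move=> x; rewrite rmorph1 mul1r.
- by move=> x y t; rewrite mulrDl.
- by move=> x t u; rewrite rmorphD mulrDr.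
- by move=> x t u; rewrite rmorphM mulrA.
- by move=> x; rewrite rmorph1 mulr1.
- by move=> r x t; rewrite mulrA.
Defined.
End Reg.

Section Restr.
Variables (R R' T T' : pzRingType).
Definition restr (phi : {rmorphism R' -> R}) (psi : {rmorphism T' -> T})
  (X : bimod R T) : bimod R' T'.
Proof.
refine (@Bimod R' T' X (fun r x => bm_l (phi r) x) (fun x t => bm_r x (psi t))
  _ _ _ _ _ _ _ _ _).
- by move=> r x y; rewrite bm_lD.
- by move=> r s x; rewrite rmorphD bm_Dl.
- by move=> r s x; rewrite rmorphM bm_lM.
- by move=> x; rewrite rmorph1 bm_l1.
- by move=> x y t; rewrite bm_rD.
- by move=> x t u; rewrite rmorphD bm_Dr.
- by move=> x t u; rewrite rmorphM bm_rM.
- by move=> x; rewrite rmorph1 bm_r1.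
- by move=> r x t; rewrite bm_lr.
Defined.
End Restr.

Definition zr (R : pzRingType) : {rmorphism int -> R} := GRing.RMorphism.clone _ _ ( *~%R (1 : R)) _.

Definition leftmod (R T : pzRingType) (X : bimod R T) : bimod R int :=
  restr idfun (zr T) X.

(* (Z, beta) is a tensor product X (x)_S Y of _R X _S and _S Y _T as an
   R-T-bimodule: beta is biadditive, S-balanced, R-T-compatible, and universal
   among all such maps into R-T-bimodules. *)
Definition balanced (R S T : pzRingType) (X : bimod R S) (Y : bimod S T)
  (W : bimod R T) (g : X -> Y -> W) : Prop :=
  [/\ forall x x' y, g (x + x') y = g x y + g x' y,
      forall x y y', g x (y + y') = g x y + g x y',
      forall x s y, g (bm_r x s) y = g x (bm_l s y),
      forall r x y, g (bm_l r x) y = bm_l r (g x y)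
    & forall x y t, g x (bm_r y t) = bm_r (g x y) t].

Definition is_tensor (R S T : pzRingType) (X : bimod R S) (Y : bimod S T)
  (Z : bimod R T) (beta : X -> Y -> Z) : Prop :=
  balanced beta /\
  forall (W : bimod R T) (g : X -> Y -> W), balanced g ->
    exists h : Z -> W, [/\ bihom h, forall x y, h (beta x y) = g x y
      & forall h' : Z -> W, bihom h' -> (forall x y, h' (beta x y) = g x y) ->
          forall z, h' z = h z].

(* A ring extension A/B: B is (identified with) a subring of A via the
   injective unital ring morphism iota : B -> A. *)
Definition ring_ext (B A : pzRingType) (iota : {rmorphism B -> A}) : Prop :=
  injective iota.

(* Left depth two: _B A (x)_B A _A | _B A _A   (for the tensor product). *)
Definition left_D2 (B A : pzRingType) (iota : {rmorphism B -> A}) : Prop :=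
  forall (Z : bimod B A)
    (beta : regbm iota iota -> regbm iota idfun -> Z),
    is_tensor beta -> bm_div Z (regbm iota idfun).

(* Right depth two: _A A (x)_B A _B | _A A _B. *)
Definition right_D2 (B A : pzRingType) (iota : {rmorphism B -> A}) : Prop :=
  forall (Z : bimod A B)
    (beta : regbm idfun iota -> regbm iota iota -> Z),
    is_tensor beta -> bm_div Z (regbm idfun iota).

(* _A M _A' is a Morita module: _A M ~ _A A, and End^r(_A M) = A', i.e. the
   canonical map A' -> End^r(_A M), a' |-> (m |-> m a'), is bijective. *)
Definition morita_module (A A' : pzRingType) (M : bimod A A') : Prop :=
  [/\ bm_sim (leftmod M) (leftmod (regbm idfun idfun : bimod A A)),
      forall a1 a2 : A', (forall m : M, bm_r m a1 = bm_r m a2) -> a1 = a2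
    & forall f : M -> M,
        (forall x y, f (x + y) = f x + f y) ->
        (forall (a : A) x, f (bm_l a x) = bm_l a (f x)) ->
        exists a' : A', forall m, f m = bm_r m a'].

(* A/B and A'/B' are Morita equivalent: there are Morita modules _A M _A' and
   _B N _B' with _A A (x)_B N _B' ≅ _A M _B'  (expressed as: M, with the
   right action restricted to B', is a tensor product A (x)_B N). *)
Definition morita_equiv (B A : pzRingType) (iota : {rmorphism B -> A})
  (B' A' : pzRingType) (iota' : {rmorphism B' -> A'}) : Prop :=
  exists (M : bimod A A') (N : bimod B B'),
    [/\ morita_module M, morita_module N
      & exists beta : regbm idfun iota -> N -> restr idfun iota' M,
          is_tensor beta].

(* Main.v *)
Require Import Defs.
From mathcomp Require Import all_boot all_order all_algebra.
From HB Require Import structures.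
From mathcomp Require Import boolp.
Set Implicit Arguments. Unset Strict Implicit. Unset Printing Implicit Defensive.
Import GRing.Theory.
Local Open Scope ring_scope.


Lemma add0 (U V : zmodType) (f : U -> V) (Hf : forall x y, f (x + y) = f x + f y) : f 0 = 0.
Proof. by have H := Hf 0 0; rewrite addr0 in H; apply: (addrI (f 0)); rewrite -H addr0. Qed.

Lemma add_sum (U V : zmodType) (f : U -> V) (Hf : forall x y, f (x + y) = f x + f y)
  I (s : seq I) (P : pred I) (F : I -> U) :
  f (\sum_(i <- s | P i) F i) = \sum_(i <- s | P i) f (F i).
Proof. exact: (big_morph _ Hf (add0 Hf)). Qed.

Lemma addN (U V : zmodType) (f : U -> V) (Hf : forall x y, f (x + y) = f x + f y) x : f (- x) = - f x.
Proof. by apply: (addrI (f x)); rewrite -Hf !subrr (add0 Hf). Qed.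

Section BmLemmas.
Variables (R T : pzRingType) (X : bimod R T).
Lemma bm_l0 r : bm_l r (0 : X) = 0.
Proof. exact: (add0 (bm_lD r)). Qed.
Lemma bm_r0 t : bm_r (0 : X) t = 0.
Proof. exact: (add0 (fun x y => bm_rD x y t)). Qed.
Lemma bm_0l (x : X) : bm_l 0 x = 0.
Proof. exact: (add0 (fun r s => bm_Dl r s x)). Qed.
Lemma bm_0r (x : X) : bm_r x 0 = 0.
Proof. exact: (add0 (fun r s => bm_Dr x r s)). Qed.
Lemma bm_l_sum I (s : seq I) (P : pred I) (F : I -> X) r :
  bm_l r (\sum_(i <- s | P i) F i) = \sum_(i <- s | P i) bm_l r (F i).
Proof. exact: (big_morph _ (bm_lD r) (bm_l0 r)). Qed.
Lemma bm_r_sum I (s : seq I) (P : pred I) (F : I -> X) t :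
  bm_r (\sum_(i <- s | P i) F i) t = \sum_(i <- s | P i) bm_r (F i) t.
Proof. exact: (big_morph (fun x => bm_r x t) (fun x y => bm_rD x y t) (bm_r0 t)). Qed.
Lemma bm_sum_l I (s : seq I) (P : pred I) (F : I -> R) (x : X) :
  bm_l (\sum_(i <- s | P i) F i) x = \sum_(i <- s | P i) bm_l (F i) x.
Proof. exact: (big_morph (fun r => bm_l r x) (fun r s => bm_Dl r s x) (bm_0l x)). Qed.
Lemma bm_sum_r I (s : seq I) (P : pred I) (F : I -> T) (x : X) :
  bm_r x (\sum_(i <- s | P i) F i) = \sum_(i <- s | P i) bm_r x (F i).
Proof. exact: (big_morph (fun t => bm_r x t) (fun t u => bm_Dr x t u) (bm_0r x)). Qed.
End BmLemmas.

Section TP.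
Variables (R S T : pzRingType) (X : bimod R S) (Y : bimod S T).

Definition bal0 (W : zmodType) (g : X -> Y -> W) : Prop :=
  [/\ forall x x' y, g (x + x') y = g x y + g x' y,
      forall x y y', g x (y + y') = g x y + g x y'
    & forall x s y, g (bm_r x s) y = g x (bm_l s y)].

Definition sumg (W : zmodType) (g : X -> Y -> W) (s : seq (X * Y)) : W :=
  \sum_(p <- s) g p.1 p.2.

Definition teq (s s' : seq (X * Y)) : Prop :=
  forall (W : zmodType) (g : X -> Y -> W), bal0 g -> sumg g s = sumg g s'.

Lemma teq_refl s : teq s s. Proof. by []. Qed.
Lemma teq_sym s s' : teq s s' -> teq s' s. Proof. by move=> H W g Hg; rewrite H. Qed.
Lemma teq_trans s1 s2 s3 : teq s1 s2 -> teq s2 s3 -> teq s1 s3.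
Proof. by move=> H1 H2 W g Hg; rewrite H1 // H2. Qed.

Definition cls (s : seq (X * Y)) : seq (X * Y) -> Prop := teq s.

Record tpt := TPt { tpP : seq (X * Y) -> Prop; tpE : exists s, tpP = cls s }.
HB.instance Definition _ := gen_eqMixin tpt.
HB.instance Definition _ := gen_choiceMixin tpt.

Definition tmk (s : seq (X * Y)) : tpt := @TPt (cls s) (ex_intro _ s erefl).

Lemma tpt_eq (q1 q2 : tpt) : tpP q1 = tpP q2 -> q1 = q2.
Proof.
case: q1 q2 => P1 E1 [P2 E2] /= e; subst P2.
by rewrite (Prop_irrelevance E1 E2).
Qed.

Lemma tmk_eq s s' : teq s s' -> tmk s = tmk s'.
Proof.
move=> H; apply: tpt_eq => /=; apply: funext => u; apply: propext; split.
  by move=> H'; apply: teq_trans (teq_sym H) H'.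
by move=> H'; apply: teq_trans H H'.
Qed.

Lemma tmk_teq s s' : tmk s = tmk s' -> teq s s'.
Proof.
move=> e; have : tpP (tmk s) s' by rewrite e /=; apply: teq_refl.
by [].
Qed.

Lemma tmk_surj (q : tpt) : exists s, q = tmk s.
Proof.
case: q => P [s e]; exists s; apply: tpt_eq => /=; exact: e.
Qed.

Definition trep (q : tpt) : seq (X * Y) := projT1 (cid (tmk_surj q)).
Lemma trepK q : tmk (trep q) = q.
Proof. by rewrite /trep; case: (cid _) => s /= ->. Qed.
Lemma trep_teq s : teq (trep (tmk s)) s.
Proof. by apply: tmk_teq; rewrite trepK. Qed.

Definition negp (p : X * Y) : X * Y := (- p.1, p.2).
Definition tzero := tmk [::].
Definition topp q := tmk (map negp (trep q)).
Definition tadd q1 q2 := tmk (trep q1 ++ trep q2).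

Lemma sumg_cat (W : zmodType) (g : X -> Y -> W) s s' : sumg g (s ++ s') = sumg g s + sumg g s'.
Proof. by rewrite /sumg big_cat. Qed.

Lemma teq_cat s1 s1' s2 s2' : teq s1 s1' -> teq s2 s2' -> teq (s1 ++ s2) (s1' ++ s2').
Proof. by move=> H1 H2 W g Hg; rewrite !sumg_cat H1 // H2. Qed.

Lemma bal0_neg (W : zmodType) (g : X -> Y -> W) : bal0 g -> forall x y, g (- x) y = - g x y.
Proof. by case=> H1 _ _ x y; apply: (addN (f := fun x => g x y)) => a b; apply: H1. Qed.

Lemma sumg_neg (W : zmodType) (g : X -> Y -> W) s : bal0 g -> sumg g (map negp s) = - sumg g s.
Proof.
move=> Hg; rewrite /sumg big_map (add_sum (f := fun x => - x)); last by move=> ??; rewrite opprD.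
by apply: eq_bigr => p _; rewrite /negp /= (bal0_neg Hg).
Qed.

Lemma teq_map_neg s s' : teq s s' -> teq (map negp s) (map negp s').
Proof. by move=> H W g Hg; rewrite !sumg_neg // H. Qed.

Lemma taddE s s' : tadd (tmk s) (tmk s') = tmk (s ++ s').
Proof. by apply: tmk_eq; apply: teq_cat; apply: trep_teq. Qed.
Lemma toppE s : topp (tmk s) = tmk (map negp s).
Proof. by apply: tmk_eq; apply: teq_map_neg; apply: trep_teq. Qed.

Lemma taddA : associative tadd.
Proof.
move=> a b c; case: (tmk_surj a) => sa ->; case: (tmk_surj b) => sb ->; case: (tmk_surj c) => sc ->.
by rewrite !taddE catA.
Qed.
Lemma taddC : commutative tadd.
Proof.
move=> a b; case: (tmk_surj a) => sa ->; case: (tmk_surj b) => sb ->.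
by rewrite !taddE; apply: tmk_eq => W g Hg; rewrite !sumg_cat addrC.
Qed.
Lemma tadd0 : left_id tzero tadd.
Proof. by move=> a; case: (tmk_surj a) => sa ->; rewrite /tzero taddE. Qed.
Lemma taddN : left_inverse tzero topp tadd.
Proof.
move=> a; case: (tmk_surj a) => sa ->; rewrite toppE taddE.
by apply: tmk_eq => W g Hg; rewrite sumg_cat sumg_neg // addNr /sumg big_nil.
Qed.

HB.instance Definition _ := GRing.isZmodule.Build tpt taddA taddC tadd0 taddN.

Definition mapl r (p : X * Y) : X * Y := (bm_l r p.1, p.2).
Definition mapr t (p : X * Y) : X * Y := (p.1, bm_r p.2 t).
Definition tl r (q : tpt) : tpt := tmk (map (mapl r) (trep q)).
Definition tr (q : tpt) t : tpt := tmk (map (mapr t) (trep q)).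

Lemma teq_mapl r s s' : teq s s' -> teq (map (mapl r) s) (map (mapl r) s').
Proof.
move=> H W g Hg; rewrite /sumg !big_map /=.
have Hg' : bal0 (fun x y => g (bm_l r x) y).
  case: Hg => H1 H2 H3; split=> //.
  - by move=> x x' y; rewrite bm_lD H1.
  - by move=> x s0 y; rewrite bm_lr H3.
exact: (H W _ Hg').
Qed.
Lemma teq_mapr t s s' : teq s s' -> teq (map (mapr t) s) (map (mapr t) s').
Proof.
move=> H W g Hg; rewrite /sumg !big_map /=.
have Hg' : bal0 (fun x y => g x (bm_r y t)).
  case: Hg => H1 H2 H3; split=> //.
  - by move=> x y y'; rewrite bm_rD H2.
  - by move=> x s0 y; rewrite H3 bm_lr.
exact: (H W _ Hg').
Qed.

Lemma tlE r s : tl r (tmk s) = tmk (map (mapl r) s).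
Proof. by apply: tmk_eq; apply: teq_mapl; apply: trep_teq. Qed.
Lemma trE t s : tr (tmk s) t = tmk (map (mapr t) s).
Proof. by apply: tmk_eq; apply: teq_mapr; apply: trep_teq. Qed.

Lemma taddE' s s' : tmk s + tmk s' = tmk (s ++ s'). Proof. exact: taddE. Qed.

Definition TPbm : bimod R T.
Proof.
refine (@Bimod R T tpt tl tr _ _ _ _ _ _ _ _ _).
- move=> r a b; case: (tmk_surj a) => sa ->; case: (tmk_surj b) => sb ->.
  by rewrite taddE' !tlE taddE' map_cat.
- move=> r s0 a; case: (tmk_surj a) => sa ->; rewrite !tlE taddE'; apply: tmk_eq => W g Hg.
  rewrite /sumg big_cat !big_map /= -big_split /=; apply: eq_bigr => p _.
  by case: Hg => H1 _ _; rewrite bm_Dl H1.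
- move=> r s0 a; case: (tmk_surj a) => sa ->; rewrite !tlE -map_comp.
  by congr tmk; apply: eq_map => p; rewrite /mapl /= bm_lM.
- move=> a; case: (tmk_surj a) => sa ->; rewrite tlE.
  by congr tmk; rewrite -[RHS]map_id; apply: eq_map => -[x y]; rewrite /mapl /= bm_l1.
- move=> a b t; case: (tmk_surj a) => sa ->; case: (tmk_surj b) => sb ->.
  by rewrite taddE' !trE taddE' map_cat.
- move=> a t u; case: (tmk_surj a) => sa ->; rewrite !trE taddE'; apply: tmk_eq => W g Hg.
  rewrite /sumg big_cat !big_map /= -big_split /=; apply: eq_bigr => p _.
  by case: Hg => _ H2 _; rewrite bm_Dr H2.
- move=> a t u; case: (tmk_surj a) => sa ->; rewrite !trE -map_comp.
  by congr tmk; apply: eq_map => p; rewrite /mapr /= bm_rM.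
- move=> a; case: (tmk_surj a) => sa ->; rewrite trE.
  by congr tmk; rewrite -[RHS]map_id; apply: eq_map => -[x y]; rewrite /mapr /= bm_r1.
- move=> r a t; case: (tmk_surj a) => sa ->; rewrite trE !tlE trE -!map_comp.
  by congr tmk; apply: eq_map => p; rewrite /mapr /mapl.
Defined.

Definition tens (x : X) (y : Y) : TPbm := tmk [:: (x, y)].

Lemma tp_ind (P : TPbm -> Prop) : P 0 -> (forall a b, P a -> P b -> P (a + b)) ->
  (forall x y, P (tens x y)) -> forall q, P q.
Proof.
move=> P0 PD Pt q; case: (tmk_surj q) => s ->; elim: s => [|[x y] s IH]; first exact: P0.
have -> : tmk ((x, y) :: s) = (tens x y + tmk s : TPbm) by rewrite /tens taddE'.
apply: PD => //.
Qed.

Definition tlift (W : zmodType) (g : X -> Y -> W) (q : TPbm) : W := sumg g (trep q).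

Lemma tliftE (W : zmodType) (g : X -> Y -> W) s : bal0 g -> tlift g (tmk s) = sumg g s.
Proof. by move=> Hg; rewrite /tlift (trep_teq s Hg). Qed.

Lemma tlift_add (W : zmodType) (g : X -> Y -> W) : bal0 g -> forall a b, tlift g (a + b) = tlift g a + tlift g b.
Proof.
move=> Hg a b; case: (tmk_surj a) => sa ->; case: (tmk_surj b) => sb ->.
by rewrite taddE' !tliftE // sumg_cat.
Qed.

Lemma tlift_tens (W : zmodType) (g : X -> Y -> W) : bal0 g -> forall x y, tlift g (tens x y) = g x y.
Proof. by move=> Hg x y; rewrite /tens tliftE // /sumg big_seq1. Qed.

Lemma tens_bal : balanced tens.
Proof.
split.
- by move=> x x' y; rewrite /tens taddE'; apply: tmk_eq => W g [H1 _ _]; rewrite /sumg !big_cons !big_nil /= H1 !addr0.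
- by move=> x y y'; rewrite /tens taddE'; apply: tmk_eq => W g [_ H2 _]; rewrite /sumg !big_cons !big_nil /= H2 !addr0.
- by move=> x s0 y; rewrite /tens; apply: tmk_eq => W g [_ _ H3]; rewrite /sumg !big_cons !big_nil /= H3.
- by move=> r x y; rewrite /tens /= tlE.
- by move=> x y t; rewrite /tens /= trE.
Qed.

Lemma tens_bal0 : bal0 tens.
Proof. by case: tens_bal. Qed.

Lemma balanced_bal0 (W : bimod R T) (g : X -> Y -> W) : balanced g -> bal0 g.
Proof. by case. Qed.

Lemma tens_is_tensor : is_tensor tens.
Proof.
split; first exact: tens_bal.
move=> W g Hg; have Hg0 := balanced_bal0 Hg.
exists (tlift g); split.
- split; first exact: tlift_add.
  + move=> r; apply: tp_ind.
    * by rewrite bm_l0 (add0 (tlift_add Hg0)) bm_l0.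
    * by move=> a b Ha Hb; rewrite bm_lD !tlift_add // Ha Hb bm_lD.
    * by move=> x y; case: tens_bal => _ _ _ H4 _; case: Hg => _ _ _ G4 _; rewrite -H4 !tlift_tens // G4.
  + move=> q t; elim/tp_ind: q.
    * by rewrite bm_r0 (add0 (tlift_add Hg0)) bm_r0.
    * by move=> a b Ha Hb; rewrite bm_rD !tlift_add // Ha Hb bm_rD.
    * by move=> x y; case: tens_bal => _ _ _ _ H5; case: Hg => _ _ _ _ G5; rewrite -H5 !tlift_tens // G5.
- by move=> x y; rewrite tlift_tens.
- move=> h' [Hh' _ _] Hh; apply: tp_ind.
  + by rewrite (add0 Hh') (add0 (tlift_add Hg0)).
  + by move=> a b Ha Hb; rewrite Hh' tlift_add // Ha Hb.
  + by move=> x y; rewrite Hh tlift_tens.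
Qed.

Lemma tensor_props (Z : bimod R T) (beta : X -> Y -> Z) : is_tensor beta ->
  (forall P : Z -> Prop, P 0 -> (forall a b, P a -> P b -> P (a + b)) ->
     (forall x y, P (beta x y)) -> forall z, P z) /\
  (forall (W : zmodType) (g : X -> Y -> W), bal0 g -> exists G : Z -> W,
     (forall a b, G (a + b) = G a + G b) /\ forall x y, G (beta x y) = g x y).
Proof.
move=> [Hb Hu].
have [h [[hD hl hr] hE _]] := Hu TPbm tens tens_bal.
have Hb0 := balanced_bal0 Hb.
have kD := tlift_add Hb0.
have kb : bihom ((tlift beta) : TPbm -> Z).
  split; first exact: kD.
  - move=> r; apply: tp_ind.
    * by rewrite bm_l0 (add0 kD) bm_l0.
    * by move=> a b Ha Hb'; rewrite bm_lD !kD Ha Hb' bm_lD.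
    * by move=> x y; case: tens_bal => _ _ _ H4 _; case: Hb => _ _ _ G4 _; rewrite -H4 !tlift_tens // G4.
  - move=> q t; elim/tp_ind: q.
    * by rewrite bm_r0 (add0 kD) bm_r0.
    * by move=> a b Ha Hb'; rewrite bm_rD !kD Ha Hb' bm_rD.
    * by move=> x y; case: tens_bal => _ _ _ _ H5; case: Hb => _ _ _ _ G5; rewrite -H5 !tlift_tens // G5.
have [hh [_ _ Huniq]] := Hu Z beta Hb.
have khE z : (tlift beta) (h z) = z.
  have e1 : (tlift beta) (h z) = hh z.
    apply: (Huniq (fun z => (tlift beta) (h z))).
    + split.
      * by move=> a b; rewrite hD kD.
      * by move=> r x; rewrite hl; case: kb => _ ->.
      * by move=> x t; rewrite hr; case: kb => _ _ ->.
    + by move=> x y; rewrite hE tlift_tens.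
  have e2 : z = hh z.
    apply: (Huniq id) => //; split=> //.
  by rewrite e1 -e2.
split.
- move=> P P0 PD Pb z; rewrite -(khE z).
  elim/tp_ind: (h z); first by rewrite (add0 kD).
  + by move=> a b Ha Hb'; rewrite kD; apply: PD.
  + by move=> x y; rewrite tlift_tens //; apply: Pb.
- move=> W g Hg; exists (fun z => tlift g (h z)); split.
  + by move=> a b; rewrite hD tlift_add.
  + by move=> x y; rewrite hE tlift_tens.
Qed.

End TP.


Definition pick (T : Type) (x0 : T) (P : T -> Prop) : T :=
  match pselect (exists x, P x) with left H => projT1 (cid H) | right _ => x0 end.
Lemma pickP T x0 (P : T -> Prop) : (exists x, P x) -> P (pick x0 P).
Proof. by move=> H; rewrite /pick; case: pselect => // H'; case: (cid H'). Qed.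

Ltac pickit := match goal with |- context [pick ?x0 ?P] => apply: (@pickP _ x0 P) end.

Section Common.
Variables (B A B' A' : pzRingType) (iota : {rmorphism B -> A}) (iota' : {rmorphism B' -> A'}).
Variables (M : bimod A A') (N : bimod B B') (bt : A -> N -> M).
Hypothesis btD1 : forall a a' n, bt (a + a') n = bt a n + bt a' n.
Hypothesis btD2 : forall a n n', bt a (n + n') = bt a n + bt a n'.
Hypothesis btB : forall a b n, bt (a * iota b) n = bt a (bm_l b n).
Hypothesis btL : forall a0 a n, bt (a0 * a) n = bm_l a0 (bt a n).
Hypothesis btR : forall a n b', bt a (bm_r n b') = bm_r (bt a n) (iota' b').
Hypothesis M_ind : forall P : M -> Prop, P 0 -> (forall x y, P x -> P y -> P (x + y)) ->
  (forall a n, P (bt a n)) -> forall m, P m.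
Hypothesis M_lift : forall (W : zmodType) (g : A -> N -> W),
  (forall a a' n, g (a + a') n = g a n + g a' n) -> (forall a n n', g a (n + n') = g a n + g a n') ->
  (forall a b n, g (a * iota b) n = g a (bm_l b n)) ->
  exists G : M -> W, (forall x y, G (x + y) = G x + G y) /\ forall a n, G (bt a n) = g a n.
Hypothesis M_faith : forall a1 a2 : A', (forall m : M, bm_r m a1 = bm_r m a2) -> a1 = a2.
Hypothesis M_full : forall f : M -> M, (forall x y, f (x + y) = f x + f y) ->
  (forall (a : A) x, f (bm_l a x) = bm_l a (f x)) -> exists a' : A', forall m, f m = bm_r m a'.
Hypothesis N_full : forall f : N -> N, (forall x y, f (x + y) = f x + f y) ->
  (forall (b : B) x, f (bm_l b x) = bm_l b (f x)) -> exists b' : B', forall n, f n = bm_r n b'.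
Variables (nL : nat) (v : 'I_nL -> N -> B) (mv : 'I_nL -> N).
Hypothesis vD : forall l x y, v l (x + y) = v l x + v l y.
Hypothesis vL : forall l b x, v l (bm_l b x) = b * v l x.
Hypothesis vmv : \sum_(l < nL) v l (mv l) = 1.

Lemma bt1 a n : bt a n = bm_l a (bt 1 n).
Proof. by rewrite -btL mulr1. Qed.

Lemma btb1 b n : bt 1 (bm_l b n) = bm_l (iota b) (bt 1 n).
Proof. by rewrite -btB mul1r bt1. Qed.

Lemma bt_sum2 a I (s : seq I) (P : pred I) (F : I -> N) :
  bt a (\sum_(i <- s | P i) F i) = \sum_(i <- s | P i) bt a (F i).
Proof. exact: (add_sum (btD2 a)). Qed.

Lemma A'ext (x y : A') : (forall a n, bm_r (bt a n) x = bm_r (bt a n) y) -> x = y.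
Proof.
move=> H; apply: M_faith => m; elim/M_ind: m => //.
- by rewrite !bm_r0.
- by move=> m m' e e'; rewrite !bm_rD e e'.
Qed.

Definition hok (h : N -> M) :=
  (forall x y, h (x + y) = h x + h y) /\ (forall b n, h (bm_l b n) = bm_l (iota b) (h n)).

Definition Efun (h : N -> M) : M -> M :=
  pick (fun _ => 0) (fun G => (forall x y, G (x + y) = G x + G y) /\
                              forall a n, G (bt a n) = bm_l a (h n)).

Lemma Efun_spec h : hok h -> (forall x y, Efun h (x + y) = Efun h x + Efun h y) /\
                              forall a n, Efun h (bt a n) = bm_l a (h n).
Proof.
move=> [hD hB]; rewrite /Efun; pickit; apply: M_lift.
- by move=> a a' n; rewrite bm_Dl.
- by move=> a n n'; rewrite hD bm_lD.
- by move=> a b n; rewrite hB bm_lM.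
Qed.

Lemma Efun_lin h : hok h -> forall (a : A) x, Efun h (bm_l a x) = bm_l a (Efun h x).
Proof.
move=> hh a x; have [ED EE] := Efun_spec hh; elim/M_ind: x.
- by rewrite bm_l0 (add0 ED) bm_l0.
- by move=> x y ex ey; rewrite bm_lD !ED ex ey bm_lD.
- by move=> a0 n; rewrite -btL !EE bm_lM.
Qed.

Definition E (h : N -> M) : A' := pick 0 (fun a' => forall m, Efun h m = bm_r m a').

Lemma E_spec' h : hok h -> forall m, bm_r m (E h) = Efun h m.
Proof.
move=> hh m; have [ED _] := Efun_spec hh.
suff : forall m, Efun h m = bm_r m (E h) by move=> ->.
by rewrite /E; pickit; apply: M_full => //; apply: Efun_lin.
Qed.

Lemma E_spec h : hok h -> forall a n, bm_r (bt a n) (E h) = bm_l a (h n).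
Proof. by move=> hh a n; rewrite E_spec' //; case: (Efun_spec hh) => _ ->. Qed.

Definition flin (f : N -> B) :=
  (forall x y, f (x + y) = f x + f y) /\ (forall b x, f (bm_l b x) = b * f x).

Definition D (f : N -> B) (m : M) : A' := E (fun n => bm_l (iota (f n)) m).

Lemma hok_D f m : flin f -> hok (fun n => bm_l (iota (f n)) m).
Proof.
move=> [fD fL]; split.
- by move=> x y; rewrite fD rmorphD bm_Dl.
- by move=> b n; rewrite fL rmorphM bm_lM.
Qed.

Lemma D_spec f m : flin f -> forall a n, bm_r (bt a n) (D f m) = bm_l (a * iota (f n)) m.
Proof. by move=> hf a n; rewrite /D E_spec ?bm_lM //; apply: hok_D. Qed.

Lemma D_mD f m m' : flin f -> D f (m + m') = D f m + D f m'.
Proof. by move=> hf; apply: A'ext => a n; rewrite bm_Dr !D_spec // bm_lD. Qed.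

Lemma D_msum f I (s : seq I) (P : pred I) (F : I -> M) : flin f ->
  D f (\sum_(i <- s | P i) F i) = \sum_(i <- s | P i) D f (F i).
Proof. by move=> hf; apply: (add_sum (f := D f)) => x y; apply: D_mD. Qed.

Lemma flin_sum I (s : seq I) (P : pred I) (F : I -> N -> B) : (forall i, flin (F i)) ->
  flin (fun n => \sum_(i <- s | P i) F i n).
Proof.
move=> hF; split.
- by move=> x y; rewrite -big_split; apply: eq_bigr => i _; case: (hF i) => ->.
- by move=> b x; rewrite mulr_sumr; apply: eq_bigr => i _; case: (hF i) => _ ->.
Qed.

Lemma D_fsum I (s : seq I) (P : pred I) (F : I -> N -> B) m : (forall i, flin (F i)) ->
  D (fun n => \sum_(i <- s | P i) F i n) m = \sum_(i <- s | P i) D (F i) m.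
Proof.
move=> hF; apply: A'ext => a n; rewrite bm_sum_r D_spec; last exact: flin_sum.
rewrite rmorph_sum mulr_sumr bm_sum_l; apply: eq_bigr => i _; by rewrite D_spec.
Qed.

Lemma D_mr f m x : flin f -> D f (bm_r m x) = D f m * x.
Proof. by move=> hf; apply: A'ext => a n; rewrite bm_rM !D_spec // bm_lr. Qed.

Lemma flin_mulr f b : flin f -> flin (fun n => f n * b).
Proof.
move=> [fD fL]; split.
- by move=> x y; rewrite fD mulrDl.
- by move=> b0 x; rewrite fL mulrA.
Qed.

Lemma D_ml f b m : flin f -> D f (bm_l (iota b) m) = D (fun n => f n * b) m.
Proof.
move=> hf; apply: A'ext => a n; rewrite !D_spec //; last exact: flin_mulr.
by rewrite -bm_lM rmorphM mulrA.
Qed.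

Lemma flin_comp f b' : flin f -> flin (fun n => f (bm_r n b')).
Proof.
move=> [fD fL]; split.
- by move=> x y; rewrite bm_rD fD.
- by move=> b x; rewrite -bm_lr fL.
Qed.

Lemma D_lB f b' m : flin f -> iota' b' * D f m = D (fun n => f (bm_r n b')) m.
Proof.
move=> hf; apply: A'ext => a n; rewrite bm_rM -btR !D_spec //; exact: flin_comp.
Qed.

Definition gam (l : 'I_nL) (n : N) : B' := pick 0 (fun b' => forall x, bm_l (v l x) n = bm_r x b').

Lemma gam_spec l n x : bm_r x (gam l n) = bm_l (v l x) n.
Proof.
suff : forall x, bm_l (v l x) n = bm_r x (gam l n) by move=> ->.
rewrite /gam; pickit; apply: N_full.
- by move=> y z; rewrite vD bm_Dl.
- by move=> b y; rewrite vL bm_lM.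
Qed.

Lemma flin_v l : flin (v l). Proof. by split; [apply: vD | apply: vL]. Qed.

Lemma gamD l n y : iota' (gam l n) * y = D (v l) (bm_r (bt 1 n) y).
Proof.
apply: A'ext => a x; rewrite bm_rM -btR gam_spec D_spec; last exact: flin_v.
by rewrite bm_lr -bt1 btB.
Qed.

Lemma n_decomp n : n = \sum_(l < nL) bm_r (mv l) (gam l n).
Proof.
under eq_bigr do rewrite gam_spec.
by rewrite -bm_sum_l vmv bm_l1.
Qed.

Definition xok (X : N -> A') :=
  (forall x y, X (x + y) = X x + X y) /\ (forall n b', X (bm_r n b') = X n * iota' b').

Section Theta.
Variables (W : zmodType) (bb : A' -> A' -> W).
Hypothesis bbD1 : forall x x' y, bb (x + x') y = bb x y + bb x' y.
Hypothesis bbD2 : forall x y y', bb x (y + y') = bb x y + bb x y'.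
Hypothesis bbB : forall x b' y, bb (x * iota' b') y = bb x (iota' b' * y).

Definition Theta (X : N -> A') (m : M) : W := \sum_(l < nL) bb (X (mv l)) (D (v l) m).

Lemma Th_mD X m m' : Theta X (m + m') = Theta X m + Theta X m'.
Proof. by rewrite /Theta -big_split; apply: eq_bigr => l _; rewrite D_mD ?bbD2 //; apply: flin_v. Qed.

Lemma Th_msum X I (s : seq I) (P : pred I) (F : I -> M) :
  Theta X (\sum_(i <- s | P i) F i) = \sum_(i <- s | P i) Theta X (F i).
Proof. by apply: (add_sum (f := Theta X)) => x y; apply: Th_mD. Qed.

Lemma Th_XD X Y m : Theta (fun n => X n + Y n) m = Theta X m + Theta Y m.
Proof. by rewrite /Theta -big_split; apply: eq_bigr => l _; rewrite bbD1. Qed.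

Lemma Th_Xsum I (s : seq I) (P : pred I) (F : I -> N -> A') m :
  Theta (fun n => \sum_(i <- s | P i) F i n) m = \sum_(i <- s | P i) Theta (F i) m.
Proof.
rewrite /Theta exchange_big /=; apply: eq_bigr => l _.
by rewrite (add_sum (f := fun x => bb x (D (v l) m))) // => x y; apply: bbD1.
Qed.

Lemma G1 X n y : xok X -> bb (X n) y = Theta X (bm_r (bt 1 n) y).
Proof.
move=> [XD XR]; rewrite {1}(n_decomp n) (add_sum XD).
rewrite (add_sum (f := fun x => bb x y)) //; apply: eq_bigr => l _.
by rewrite XR bbB gamD.
Qed.

Lemma G2 X b m : xok X -> Theta X (bm_l (iota b) m) = Theta (fun n => X (bm_l b n)) m.
Proof.
move=> hX; rewrite {2}/Theta.
under eq_bigr => l _ do rewrite (G1 _ _ hX) (D_spec _ (flin_v l)) mul1r.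
rewrite -Th_msum -bm_sum_l -rmorph_sum.
congr (Theta X (bm_l (iota _) m)).
by under eq_bigr do rewrite vL; rewrite -mulr_sumr vmv mulr1.
Qed.

End Theta.

Section PhiPsi.
Variable phi : A -> A.
Hypothesis phD : forall x y, phi (x + y) = phi x + phi y.
Hypothesis phL : forall b a, phi (iota b * a) = iota b * phi a.
Hypothesis phR : forall a b, phi (a * iota b) = phi a * iota b.

Definition Phi : M -> M := pick id (fun G => (forall x y, G (x + y) = G x + G y) /\
                              forall a n, G (bt a n) = bt (phi a) n).

Lemma Phi_spec : (forall x y, Phi (x + y) = Phi x + Phi y) /\ forall a n, Phi (bt a n) = bt (phi a) n.
Proof.
rewrite /Phi; pickit; apply: M_lift.
- by move=> a a' n; rewrite phD btD1.
- by move=> a n n'; rewrite btD2.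
- by move=> a b n; rewrite phR btB.
Qed.

Lemma PhiD x y : Phi (x + y) = Phi x + Phi y. Proof. by case: Phi_spec. Qed.
Lemma PhiE a n : Phi (bt a n) = bt (phi a) n. Proof. by case: Phi_spec. Qed.

Lemma Phi_l b m : Phi (bm_l (iota b) m) = bm_l (iota b) (Phi m).
Proof.
elim/M_ind: m.
- by rewrite bm_l0 (add0 PhiD) bm_l0.
- by move=> x y ex ey; rewrite bm_lD !PhiD ex ey bm_lD.
- by move=> a n; rewrite -btL !PhiE phL btL.
Qed.

Lemma Phi_r b' m : Phi (bm_r m (iota' b')) = bm_r (Phi m) (iota' b').
Proof.
elim/M_ind: m.
- by rewrite bm_r0 (add0 PhiD) bm_r0.
- by move=> x y ex ey; rewrite bm_rD !PhiD ex ey bm_rD.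
- by move=> a n; rewrite -btR !PhiE btR.
Qed.

Definition Psi (x : A') : A' := E (fun n => Phi (bm_r (bt 1 n) x)).

Lemma hok_Psi x : hok (fun n => Phi (bm_r (bt 1 n) x)).
Proof.
split.
- by move=> n n'; rewrite btD2 bm_rD PhiD.
- by move=> b n; rewrite btb1 -bm_lr Phi_l.
Qed.

Lemma Psi_spec x a n : bm_r (bt a n) (Psi x) = bm_l a (Phi (bm_r (bt 1 n) x)).
Proof. by rewrite /Psi E_spec //; apply: hok_Psi. Qed.

Lemma PsiD x y : Psi (x + y) = Psi x + Psi y.
Proof. by apply: A'ext => a n; rewrite bm_Dr !Psi_spec bm_Dr PhiD bm_lD. Qed.

Lemma Psi_lB b' x : Psi (iota' b' * x) = iota' b' * Psi x.
Proof. by apply: A'ext => a n; rewrite bm_rM -btR !Psi_spec bm_rM -btR. Qed.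

Lemma Psi_rB b' x : Psi (x * iota' b') = Psi x * iota' b'.
Proof. by apply: A'ext => a n; rewrite bm_rM !Psi_spec bm_rM Phi_r bm_lr. Qed.

End PhiPsi.


Lemma M_ext (W : zmodType) (F G : M -> W) :
  (forall x y, F (x + y) = F x + F y) -> (forall x y, G (x + y) = G x + G y) ->
  (forall a n, F (bt a n) = G (bt a n)) -> forall m, F m = G m.
Proof.
move=> FD GD H m; elim/M_ind: m => //.
- by rewrite (add0 FD) (add0 GD).
- by move=> x y ex ey; rewrite FD GD ex ey.
Qed.

Lemma bm_rsum_l (X : bimod A A') I (s : seq I) (P : pred I) (F : I -> X) t :
  bm_r (\sum_(i <- s | P i) F i) t = \sum_(i <- s | P i) bm_r (F i) t.
Proof. exact: bm_r_sum. Qed.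

Section Left.
Variables (nK : nat) (p : 'I_nK -> N -> B) (nb : 'I_nK -> N).
Hypothesis pD : forall k x y, p k (x + y) = p k x + p k y.
Hypothesis pL : forall k b x, p k (bm_l b x) = b * p k x.
Hypothesis pnb : forall n, \sum_(k < nK) bm_l (p k n) (nb k) = n.

Lemma flin_p k : flin (p k). Proof. by split; [apply: pD | apply: pL]. Qed.

Let TL := TPbm (regbm iota iota) (regbm iota idfun).
Let tnL : A -> A -> TL := @tens _ _ _ (regbm iota iota) (regbm iota idfun).

Variables (nI : nat) (fi : 'I_nI -> TL -> regbm iota idfun) (gi : 'I_nI -> regbm iota idfun -> TL).
Hypothesis fih : forall i, bihom (fi i).
Hypothesis gih : forall i, bihom (gi i).
Hypothesis fgi : forall t, \sum_(i < nI) gi i (fi i t) = t.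

Variables (Z : bimod B' A') (bz : regbm iota' iota' -> regbm iota' idfun -> Z).
Hypothesis bzT : is_tensor bz.

Lemma bzD1 (x x' y : A') : bz (x + x') y = bz x y + bz x' y.
Proof. by case: bzT => [[H1 H2 H3 H4 H5] _]; apply: H1. Qed.
Lemma bzD2 (x y y' : A') : bz x (y + y') = bz x y + bz x y'.
Proof. by case: bzT => [[H1 H2 H3 H4 H5] _]; apply: H2. Qed.
Lemma bzB (x : A') b' (y : A') : bz (x * iota' b') y = bz x (iota' b' * y).
Proof. by case: bzT => [[H1 H2 H3 H4 H5] _]; apply: H3. Qed.
Lemma bzL b' (x y : A') : bz (iota' b' * x) y = bm_l b' (bz x y).
Proof. by case: bzT => [[H1 H2 H3 H4 H5] _]; apply: H4. Qed.
Lemma bzR (x y a : A') : bz x (y * a) = bm_r (bz x y) a.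
Proof. by case: bzT => [[H1 H2 H3 H4 H5] _]; apply: H5. Qed.


Definition Xf (f : N -> B) (u : A) : N -> A' := fun n => D f (bt u n).

Lemma xok_Xf f u : flin f -> xok (Xf f u).
Proof.
move=> hf; split.
- by move=> x y; rewrite /Xf btD2 D_mD.
- by move=> n b'; rewrite /Xf btR D_mr.
Qed.

Definition Th := Theta bz.

Definition lamg (f : N -> B) (m : M) : regbm iota iota -> regbm iota idfun -> Z :=
  fun u w => Th (Xf f u) (bm_l w m).

Lemma lamg_bal f m : flin f -> bal0 (lamg f m).
Proof.
move=> hf; split.
- move=> u u' w; rewrite /lamg.
  have -> : Xf f (u + u') = fun n => Xf f u n + Xf f u' n.
    by apply: funext => n; rewrite /Xf btD1 D_mD.
  by rewrite /Th Th_XD //; apply: bzD1.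
- by move=> u w w'; rewrite /lamg bm_Dl /Th Th_mD //; apply: bzD2.
- move=> u s0 w; rewrite /lamg /= bm_lM /Th G2 //; last exact: xok_Xf.
  + congr Theta; apply: funext => n; by rewrite /Xf btB.
  + exact: bzD1.
  + exact: bzD2.
  + exact: bzB.
Qed.

Definition Lam (f : N -> B) (t : TL) (m : M) : Z := tlift (lamg f m) t.

Lemma LamD f t t' m : flin f -> Lam f (t + t') m = Lam f t m + Lam f t' m.
Proof. by move=> hf; rewrite /Lam tlift_add //; apply: lamg_bal. Qed.

Lemma Lam0 f m : flin f -> Lam f 0 m = 0.
Proof. by move=> hf; apply: (add0 (f := fun t => Lam f t m)) => ??; apply: LamD. Qed.

Lemma LamE f u w m : flin f -> Lam f (tnL u w) m = Th (Xf f u) (bm_l w m).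
Proof. by move=> hf; rewrite /Lam /tnL tlift_tens //; apply: lamg_bal. Qed.

Lemma Lam_tsum f I (s : seq I) (P : pred I) (F : I -> TL) m : flin f ->
  Lam f (\sum_(i <- s | P i) F i) m = \sum_(i <- s | P i) Lam f (F i) m.
Proof. by move=> hf; apply: (add_sum (f := fun t => Lam f t m)) => ??; apply: LamD. Qed.

Lemma Lam_m f t m m' : flin f -> Lam f t (m + m') = Lam f t m + Lam f t m'.
Proof.
move=> hf; elim/tp_ind: t.
- by rewrite !Lam0 ?addr0.
- by move=> a b ea eb; rewrite !LamD // ea eb addrACA.
- by move=> u w; rewrite -/(tnL u w) !LamE // bm_lD /Th Th_mD //; apply: bzD2.
Qed.

Lemma Lam_msum f t I (s : seq I) (P : pred I) (F : I -> M) : flin f ->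
  Lam f t (\sum_(i <- s | P i) F i) = \sum_(i <- s | P i) Lam f t (F i).
Proof. by move=> hf; apply: (add_sum (f := fun m => Lam f t m)) => ??; apply: Lam_m. Qed.

Lemma Lam_rc f t (c : A) m : flin f -> Lam f (bm_r t c) m = Lam f t (bm_l c m).
Proof.
move=> hf; elim/tp_ind: t.
- by rewrite bm_r0 !Lam0.
- by move=> a b ea eb; rewrite bm_rD !LamD // ea eb.
- move=> u w; rewrite -/(tnL u w).
  have -> : bm_r (tnL u w) c = tnL u (w * c).
    by case: (tens_bal (regbm iota iota) (regbm iota idfun)) => _ _ _ _ <-.
  by rewrite !LamE // bm_lM.
Qed.

Lemma Lam_lb f b t m : flin f -> Lam f (bm_l b t) m = Lam (fun n => f n * b) t m.
Proof.
move=> hf; have hf' := flin_mulr b hf; elim/tp_ind: t.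
- by rewrite bm_l0 !Lam0.
- by move=> x y ex ey; rewrite bm_lD !LamD // ex ey.
- move=> u w; rewrite -/(tnL u w).
  have -> : bm_l b (tnL u w) = tnL (iota b * u) w.
    by case: (tens_bal (regbm iota iota) (regbm iota idfun)) => _ _ _ <- _.
  rewrite !LamE //; congr Th; apply: funext => n.
  by rewrite /Xf btL D_ml.
Qed.

Lemma Lam_lB f b' t m : flin f -> bm_l b' (Lam f t m) = Lam (fun n => f (bm_r n b')) t m.
Proof.
move=> hf; have hf' := flin_comp b' hf; elim/tp_ind: t.
- by rewrite !Lam0 // bm_l0.
- by move=> x y ex ey; rewrite !LamD // bm_lD ex ey.
- move=> u w; rewrite -/(tnL u w) !LamE // /Th /Theta bm_l_sum.
  apply: eq_bigr => l _; by rewrite -bzL /Xf D_lB.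
Qed.

Lemma Lam_rA f t m (y : A') : flin f -> bm_r (Lam f t m) y = Lam f t (bm_r m y).
Proof.
move=> hf; elim/tp_ind: t.
- by rewrite !Lam0 // bm_r0.
- by move=> a b ea eb; rewrite !LamD // bm_rD ea eb.
- move=> u w; rewrite -/(tnL u w) !LamE // /Th /Theta bm_r_sum.
  apply: eq_bigr => l _; by rewrite -bzR -D_mr ?bm_lr //; apply: flin_v.
Qed.

Lemma Lam_fsum I (s : seq I) (P : pred I) (F : I -> N -> B) t m : (forall i, flin (F i)) ->
  Lam (fun n => \sum_(i <- s | P i) F i n) t m = \sum_(i <- s | P i) Lam (F i) t m.
Proof.
move=> hF; have hS := flin_sum s P hF; elim/tp_ind: t.
- by rewrite Lam0 // big1 // => i _; rewrite Lam0.
- by move=> a b ea eb; rewrite LamD // ea eb -big_split; apply: eq_bigr => i _; rewrite LamD.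
- move=> u w; rewrite -/(tnL u w) LamE //.
  have -> : Xf (fun n => \sum_(i <- s | P i) F i n) u = fun n => \sum_(i <- s | P i) Xf (F i) u n.
    by apply: funext => n; rewrite /Xf D_fsum.
  rewrite /Th Th_Xsum; last exact: bzD1.
  by apply: eq_bigr => i _; rewrite LamE.
Qed.

Definition ti i : TL := gi i 1.
Definition phl i (a : A) : A := fi i (tnL a 1).

Lemma Q1 a : tnL a 1 = \sum_(i < nI) bm_r (ti i) (phl i a).
Proof.
rewrite -{1}(fgi (tnL a 1)); apply: eq_bigr => i _; rewrite /ti /phl.
case: (gih i) => _ _ <-; congr (gi i _); by rewrite /= mul1r.
Qed.

Lemma Q2 i b : bm_l b (ti i) = bm_r (ti i) (iota b).
Proof.
rewrite /ti; case: (gih i) => _ <- <-; congr (gi i _); by rewrite /= mulr1 mul1r.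
Qed.

Lemma phlD i x y : phl i (x + y) = phl i x + phl i y.
Proof.
rewrite /phl; case: (fih i) => <- _ _; congr (fi i _).
by case: (tens_bal (regbm iota iota) (regbm iota idfun)) => <-.
Qed.

Lemma phlL i b a : phl i (iota b * a) = iota b * phl i a.
Proof.
rewrite /phl; case: (fih i) => _ H _; rewrite -[RHS]/(bm_l b (fi i (tnL a 1))) -H.
by case: (tens_bal (regbm iota iota) (regbm iota idfun)) => _ _ _ <-.
Qed.

Lemma phlR i a b : phl i (a * iota b) = phl i a * iota b.
Proof.
rewrite /phl; case: (fih i) => _ _ H; rewrite -[RHS]/(bm_r (fi i (tnL a 1)) (iota b)) -H.
case: (tens_bal (regbm iota iota) (regbm iota idfun)) => _ _ H3 _ H5.
congr (fi i _); rewrite /tnL -H5; have := H3 a b 1; rewrite /= => ->.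
by rewrite mulr1 mul1r.
Qed.

Let PhEi i := PhiE (phlD i) (phlR i).
Let PhDi i := PhiD (phlD i) (phlR i).
Let PsSi i := Psi_spec (phlD i) (phlL i) (phlR i).

Lemma x_decomp (x : A') : x = \sum_(k < nK) D (p k) (bm_r (bt 1 (nb k)) x).
Proof.
apply: A'ext => a n; rewrite bm_sum_r.
under eq_bigr => k _ do rewrite (D_spec _ (flin_p k)) bm_lr -bt1 btB.
by rewrite -bm_r_sum -bt_sum2 pnb.
Qed.

Lemma Klem f m : flin f -> bz (D f m) 1 = \sum_(i < nI) Lam f (ti i) (Phi (phl i) m).
Proof.
move=> hf; move: m; apply: M_ext.
- by move=> x y; rewrite D_mD // bzD1.
- move=> x y; rewrite -big_split; apply: eq_bigr => i _; by rewrite PhDi Lam_m.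
- move=> a n; rewrite -[D f (bt a n)]/(Xf f a n) (G1 bzD1 bzB n 1 (xok_Xf a hf)).
  rewrite bm_r1 -[bt 1 n]bm_l1 -/Th -LamE // Q1 Lam_tsum //; apply: eq_bigr => i _.
  by rewrite Lam_rc // PhEi -bt1.
Qed.

Definition zl i : Z := \sum_(k < nK) Lam (p k) (ti i) (bt 1 (nb k)).

Lemma main_l (x : A') : bz x 1 = \sum_(i < nI) bm_r (zl i) (Psi (phl i) x).
Proof.
rewrite {1}(x_decomp x) (add_sum (f := fun y => bz y 1)); last by move=> ??; apply: bzD1.
under eq_bigr => k _ do rewrite (Klem _ (flin_p k)).
rewrite exchange_big /=; apply: eq_bigr => i _; rewrite /zl bm_r_sum.
by apply: eq_bigr => k _; rewrite Lam_rA ?flin_p // PsSi bm_l1.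
Qed.

Lemma central_l i b' : bm_l b' (zl i) = bm_r (zl i) (iota' b').
Proof.
rewrite /zl bm_l_sum bm_r_sum.
under [RHS]eq_bigr => k _ do rewrite (Lam_rA _ _ _ (flin_p k)) -btR -{1}(pnb (bm_r (nb k) b')) bt_sum2 (Lam_msum _ _ _ _ (flin_p k)).
under [RHS]eq_bigr => k _ do under eq_bigr => k' _ do rewrite btb1 -(Lam_rc _ _ _ (flin_p k)) -Q2 (Lam_lb _ _ _ (flin_p k)).
rewrite exchange_big /=; apply: eq_bigr => k' _.
rewrite (Lam_lB _ _ _ (flin_p k')) -Lam_fsum; last by move=> k; apply: flin_mulr; apply: flin_p.
congr Lam; apply: funext => n.
rewrite -{1}(pnb n) bm_r_sum (add_sum (pD k')); apply: eq_bigr => k _.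
by rewrite -bm_lr pL.
Qed.

Lemma zl_l i r (x : A') : bm_r (zl i) (iota' r * x) = bm_l r (bm_r (zl i) x).
Proof. by rewrite bm_rM -central_l bm_lr. Qed.

Lemma left_div : bm_div Z (regbm iota' idfun).
Proof.
pose gl i : regbm iota' iota' -> regbm iota' idfun -> regbm iota' idfun :=
  fun x y => Psi (phl i) x * y.
have gl_bal i : balanced (gl i).
  split.
  - by move=> x x' y; rewrite /gl (PsiD (phlD i) (phlL i) (phlR i)) mulrDl.
  - by move=> x y y'; rewrite /gl mulrDr.
  - by move=> x s0 y; rewrite /gl /= (Psi_rB (phlD i) (phlL i) (phlR i)) mulrA.
  - by move=> r x y; rewrite /gl /= (Psi_lB (phlD i) (phlL i) (phlR i)) mulrA.
  - by move=> x y t; rewrite /gl /= mulrA.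
pose fpr i : Z -> regbm iota' idfun :=
  pick (fun _ => 0) (fun h => bihom h /\ forall x y, h (bz x y) = gl i x y).
have fpr_spec i : bihom (fpr i) /\ forall x y, fpr i (bz x y) = gl i x y.
  rewrite /fpr; pickit; case: bzT => _ Hu; case: (Hu _ _ (gl_bal i)) => h [hb hE _].
  by exists h.
exists nI, fpr, (fun i (a : regbm iota' idfun) => bm_r (zl i) a : Z).
split.
- by move=> i; case: (fpr_spec i).
- move=> i; split.
  + by move=> x y; rewrite bm_Dr.
  + by move=> r x /=; rewrite zl_l.
  + by move=> x t /=; rewrite bm_rM.
- case: bzT => Hb Hu; case: (Hu Z bz Hb) => hh [_ _ Huniq] z.
  have e2 : z = hh z by apply: (Huniq id).
  rewrite {2}e2; apply: (Huniq (fun z => \sum_(i < nI) bm_r (zl i) (fpr i z))).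
  + split.
    * move=> a b; rewrite -big_split; apply: eq_bigr => i _.
      by case: (fpr_spec i) => -[-> _ _] _; rewrite bm_Dr.
    * move=> r a; rewrite bm_l_sum; apply: eq_bigr => i _.
      by case: (fpr_spec i) => -[_ -> _] _; rewrite /= zl_l.
    * move=> a t; rewrite bm_r_sum; apply: eq_bigr => i _.
      by case: (fpr_spec i) => -[_ _ ->] _; rewrite /= bm_rM.
  + move=> x y; under eq_bigr => i _ do rewrite (proj2 (fpr_spec i)) /gl bm_rM.
    by rewrite -bm_r_sum -main_l -bzR mul1r.
Qed.
End Left.

Section Right.
Variables (nP : nat) (P : 'I_nP -> M -> A) (mu : 'I_nP -> M).
Hypothesis PD : forall k x y, P k (x + y) = P k x + P k y.
Hypothesis PL : forall k a x, P k (bm_l a x) = a * P k x.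
Hypothesis Pmu : forall m, \sum_(k < nP) bm_l (P k m) (mu k) = m.

Let TR := TPbm (regbm idfun iota) (regbm iota iota).
Let tnR : A -> A -> TR := @tens _ _ _ (regbm idfun iota) (regbm iota iota).

Variables (nI : nat) (fi : 'I_nI -> TR -> regbm idfun iota) (gi : 'I_nI -> regbm idfun iota -> TR).
Hypothesis fih : forall i, bihom (fi i).
Hypothesis gih : forall i, bihom (gi i).
Hypothesis fgi : forall t, \sum_(i < nI) gi i (fi i t) = t.

Variables (Z : bimod A' B') (bz : regbm idfun iota' -> regbm iota' iota' -> Z).
Hypothesis bzT : is_tensor bz.

Lemma rzD1 (x x' y : A') : bz (x + x') y = bz x y + bz x' y.
Proof. by case: bzT => [[H1 H2 H3 H4 H5] _]; apply: H1. Qed.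
Lemma rzD2 (x y y' : A') : bz x (y + y') = bz x y + bz x y'.
Proof. by case: bzT => [[H1 H2 H3 H4 H5] _]; apply: H2. Qed.
Lemma rzB (x : A') b' (y : A') : bz (x * iota' b') y = bz x (iota' b' * y).
Proof. by case: bzT => [[H1 H2 H3 H4 H5] _]; apply: H3. Qed.
Lemma rzL (a x y : A') : bz (a * x) y = bm_l a (bz x y).
Proof. by case: bzT => [[H1 H2 H3 H4 H5] _]; apply: H4. Qed.
Lemma rzR (x y : A') b' : bz x (y * iota' b') = bm_r (bz x y) b'.
Proof. by case: bzT => [[H1 H2 H3 H4 H5] _]; apply: H5. Qed.

Definition mlin (F : M -> A) :=
  (forall x y, F (x + y) = F x + F y) /\ (forall a x, F (bm_l a x) = a * F x).

Lemma mlin_P k : mlin (P k). Proof. by split; [apply: PD | apply: PL]. Qed.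

Definition C (F : M -> A) (m0 : M) : A' := pick 0 (fun a' => forall m, bm_l (F m) m0 = bm_r m a').

Lemma C_spec F m0 : mlin F -> forall m, bm_r m (C F m0) = bm_l (F m) m0.
Proof.
move=> [FD FL]; suff : forall m, bm_l (F m) m0 = bm_r m (C F m0) by move=> H m; rewrite H.
rewrite /C; pickit; apply: M_full.
- by move=> x y; rewrite FD bm_Dl.
- by move=> a x; rewrite FL bm_lM.
Qed.

Lemma C_mD F m0 m1 : mlin F -> C F (m0 + m1) = C F m0 + C F m1.
Proof. by move=> hF; apply: M_faith => m; rewrite bm_Dr !C_spec // bm_lD. Qed.

Lemma C_mr F m0 x : mlin F -> C F (bm_r m0 x) = C F m0 * x.
Proof. by move=> hF; apply: M_faith => m; rewrite bm_rM !C_spec // bm_lr. Qed.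

Lemma mlin_mulr F a : mlin F -> mlin (fun m => F m * a).
Proof. by move=> [FD FL]; split=> [x y|a0 x]; rewrite ?FD ?mulrDl // FL mulrA. Qed.

Lemma mlin_comp F x : mlin F -> mlin (fun m => F (bm_r m x)).
Proof. by move=> [FD FL]; split=> [y z|a0 y]; rewrite ?bm_rD ?FD // -bm_lr FL. Qed.

Lemma mlin_sum I (s : seq I) (Q : pred I) (G : I -> M -> A) : (forall i, mlin (G i)) ->
  mlin (fun m => \sum_(i <- s | Q i) G i m).
Proof.
move=> hG; split.
- by move=> x y; rewrite -big_split; apply: eq_bigr => i _; case: (hG i) => ->.
- by move=> a x; rewrite mulr_sumr; apply: eq_bigr => i _; case: (hG i) => _ ->.
Qed.

Lemma C_ml F a m0 : mlin F -> C F (bm_l a m0) = C (fun m => F m * a) m0.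
Proof.
move=> hF; apply: M_faith => m; rewrite !C_spec //; last exact: mlin_mulr.
by rewrite bm_lM.
Qed.

Lemma C_lA F x m0 : mlin F -> x * C F m0 = C (fun m => F (bm_r m x)) m0.
Proof.
move=> hF; apply: M_faith => m; rewrite bm_rM !C_spec //; exact: mlin_comp.
Qed.

Lemma C_fsum I (s : seq I) (Q : pred I) (G : I -> M -> A) m0 : (forall i, mlin (G i)) ->
  C (fun m => \sum_(i <- s | Q i) G i m) m0 = \sum_(i <- s | Q i) C (G i) m0.
Proof.
move=> hG; apply: M_faith => m; rewrite bm_sum_r C_spec; last exact: mlin_sum.
by rewrite bm_sum_l; apply: eq_bigr => i _; rewrite C_spec.
Qed.

Lemma one_decomp : 1 = \sum_(k < nP) C (P k) (mu k).
Proof.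
apply: M_faith => m; rewrite bm_r1 bm_sum_r.
by under eq_bigr => k _ do rewrite (C_spec _ (mlin_P k)); rewrite Pmu.
Qed.

Definition Xr (F : M -> A) (u : A) : N -> A' := fun n => C F (bt u n).

Lemma xok_Xr F u : mlin F -> xok (Xr F u).
Proof.
move=> hF; split.
- by move=> x y; rewrite /Xr btD2 C_mD.
- by move=> n b'; rewrite /Xr btR C_mr.
Qed.

Definition ThR := Theta bz.

Definition lamr (F : M -> A) (n : N) : regbm idfun iota -> regbm iota iota -> Z :=
  fun u w => ThR (Xr F u) (bt w n).

Lemma lamr_bal F n : mlin F -> bal0 (lamr F n).
Proof.
move=> hF; split.
- move=> u u' w; rewrite /lamr.
  have -> : Xr F (u + u') = fun n => Xr F u n + Xr F u' n.
    by apply: funext => n0; rewrite /Xr btD1 C_mD.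
  by rewrite /ThR Th_XD //; apply: rzD1.
- by move=> u w w'; rewrite /lamr btD1 /ThR Th_mD //; apply: rzD2.
- move=> u s0 w; rewrite /lamr /= btL /ThR (G2 rzD1 rzD2 rzB); last exact: xok_Xr.
  congr Theta; apply: funext => n0; by rewrite /Xr btB.
Qed.

Definition LamR (F : M -> A) (t : TR) (n : N) : Z := tlift (lamr F n) t.

Lemma LamRD F t t' n : mlin F -> LamR F (t + t') n = LamR F t n + LamR F t' n.
Proof. by move=> hF; rewrite /LamR tlift_add //; apply: lamr_bal. Qed.

Lemma LamR0 F n : mlin F -> LamR F 0 n = 0.
Proof. by move=> hF; apply: (add0 (f := fun t => LamR F t n)) => ??; apply: LamRD. Qed.

Lemma LamRE F u w n : mlin F -> LamR F (tnR u w) n = ThR (Xr F u) (bt w n).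
Proof. by move=> hF; rewrite /LamR /tnR tlift_tens //; apply: lamr_bal. Qed.

Lemma LamR_tsum F I (s : seq I) (Q : pred I) (G : I -> TR) n : mlin F ->
  LamR F (\sum_(i <- s | Q i) G i) n = \sum_(i <- s | Q i) LamR F (G i) n.
Proof. by move=> hF; apply: (add_sum (f := fun t => LamR F t n)) => ??; apply: LamRD. Qed.

Lemma LamR_n F t n n' : mlin F -> LamR F t (n + n') = LamR F t n + LamR F t n'.
Proof.
move=> hF; elim/tp_ind: t.
- by rewrite !LamR0 ?addr0.
- by move=> a b ea eb; rewrite !LamRD // ea eb addrACA.
- by move=> u w; rewrite -/(tnR u w) !LamRE // btD2 /ThR Th_mD //; apply: rzD2.
Qed.

Lemma LamR_rb F t b n : mlin F -> LamR F (bm_r t b) n = LamR F t (bm_l b n).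
Proof.
move=> hF; elim/tp_ind: t.
- by rewrite bm_r0 !LamR0.
- by move=> a b0 ea eb; rewrite bm_rD !LamRD // ea eb.
- move=> u w; rewrite -/(tnR u w).
  have -> : bm_r (tnR u w) b = tnR u (w * iota b).
    by case: (tens_bal (regbm idfun iota) (regbm iota iota)) => _ _ _ _ <-.
  by rewrite !LamRE // btB.
Qed.

Lemma LamR_la F a t n : mlin F -> LamR F (bm_l a t) n = LamR (fun m => F m * a) t n.
Proof.
move=> hF; have hF' := mlin_mulr a hF; elim/tp_ind: t.
- by rewrite bm_l0 !LamR0.
- by move=> x y ex ey; rewrite bm_lD !LamRD // ex ey.
- move=> u w; rewrite -/(tnR u w).
  have -> : bm_l a (tnR u w) = tnR (a * u) w.
    by case: (tens_bal (regbm idfun iota) (regbm iota iota)) => _ _ _ <- _.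
  rewrite !LamRE //; congr ThR; apply: funext => n0.
  by rewrite /Xr btL C_ml.
Qed.

Lemma LamR_lA F x t n : mlin F -> bm_l x (LamR F t n) = LamR (fun m => F (bm_r m x)) t n.
Proof.
move=> hF; have hF' := mlin_comp x hF; elim/tp_ind: t.
- by rewrite !LamR0 // bm_l0.
- by move=> a b ea eb; rewrite !LamRD // bm_lD ea eb.
- move=> u w; rewrite -/(tnR u w) !LamRE // /ThR /Theta bm_l_sum.
  apply: eq_bigr => l _; by rewrite -rzL /Xr C_lA.
Qed.

Lemma LamR_rB F t n b' : mlin F -> bm_r (LamR F t n) b' = LamR F t (bm_r n b').
Proof.
move=> hF; elim/tp_ind: t.
- by rewrite !LamR0 // bm_r0.
- by move=> a b ea eb; rewrite !LamRD // bm_rD ea eb.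
- move=> u w; rewrite -/(tnR u w) !LamRE // /ThR /Theta bm_r_sum.
  apply: eq_bigr => l _; by rewrite -rzR -D_mr ?btR //; apply: flin_v.
Qed.

Lemma LamR_fsum I (s : seq I) (Q : pred I) (G : I -> M -> A) t n : (forall i, mlin (G i)) ->
  LamR (fun m => \sum_(i <- s | Q i) G i m) t n = \sum_(i <- s | Q i) LamR (G i) t n.
Proof.
move=> hG; have hS := mlin_sum s Q hG; elim/tp_ind: t.
- by rewrite LamR0 // big1 // => i _; rewrite LamR0.
- by move=> a b ea eb; rewrite LamRD // ea eb -big_split; apply: eq_bigr => i _; rewrite LamRD.
- move=> u w; rewrite -/(tnR u w) LamRE //.
  have -> : Xr (fun m => \sum_(i <- s | Q i) G i m) u = fun n => \sum_(i <- s | Q i) Xr (G i) u n.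
    by apply: funext => n0; rewrite /Xr C_fsum.
  rewrite /ThR Th_Xsum; last exact: rzD1.
  by apply: eq_bigr => i _; rewrite LamRE.
Qed.


Definition zi i : TR := gi i 1.
Definition psr i (w : A) : A := fi i (tnR 1 w).

Lemma R1 w : tnR 1 w = \sum_(i < nI) bm_l (psr i w) (zi i).
Proof.
rewrite -{1}(fgi (tnR 1 w)); apply: eq_bigr => i _; rewrite /zi /psr.
case: (gih i) => _ <- _; congr (gi i _); by rewrite /= mulr1.
Qed.

Lemma R2 i b : bm_r (zi i) b = bm_l (iota b) (zi i).
Proof.
rewrite /zi; case: (gih i) => _ <- <-; congr (gi i _); by rewrite /= mulr1 mul1r.
Qed.

Lemma psrD i x y : psr i (x + y) = psr i x + psr i y.
Proof.
rewrite /psr; case: (fih i) => <- _ _; congr (fi i _).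
by case: (tens_bal (regbm idfun iota) (regbm iota iota)) => _ <-.
Qed.

Lemma psrL i b w : psr i (iota b * w) = iota b * psr i w.
Proof.
rewrite /psr; case: (fih i) => _ H _; rewrite -[RHS]/(bm_l (iota b) (fi i (tnR 1 w))) -H.
case: (tens_bal (regbm idfun iota) (regbm iota iota)) => _ _ H3 H4 _.
congr (fi i _); rewrite /tnR -H4; have := H3 1 b w; rewrite /= => <-.
by rewrite mulr1 mul1r.
Qed.

Lemma psrR i w b : psr i (w * iota b) = psr i w * iota b.
Proof.
rewrite /psr; case: (fih i) => _ _ H; rewrite -[RHS]/(bm_r (fi i (tnR 1 w)) b) -H.
by case: (tens_bal (regbm idfun iota) (regbm iota iota)) => _ _ _ _ <-.
Qed.

Let PhEr i := PhiE (psrD i) (psrR i).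
Let PhDr i := PhiD (psrD i) (psrR i).
Let PsSr i := Psi_spec (psrD i) (psrL i) (psrR i).

Definition Lz (F : M -> A) i : M -> Z :=
  pick (fun _ => 0) (fun G => (forall x y, G (x + y) = G x + G y) /\
                              forall a n, G (bt a n) = LamR F (bm_l a (zi i)) n).

Lemma Lz_spec F i : mlin F -> (forall x y, Lz F i (x + y) = Lz F i x + Lz F i y) /\
                              forall a n, Lz F i (bt a n) = LamR F (bm_l a (zi i)) n.
Proof.
move=> hF; rewrite /Lz; pickit; apply: M_lift.
- by move=> a a' n; rewrite bm_Dl LamRD.
- by move=> a n n'; rewrite LamR_n.
- by move=> a b n; rewrite bm_lM -R2 bm_lr LamR_rb.
Qed.

Lemma LzD F i x y : mlin F -> Lz F i (x + y) = Lz F i x + Lz F i y.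
Proof. by move=> hF; case: (Lz_spec i hF) => ->. Qed.
Lemma LzE F i a n : mlin F -> Lz F i (bt a n) = LamR F (bm_l a (zi i)) n.
Proof. by move=> hF; case: (Lz_spec i hF) => _ ->. Qed.

Lemma Lz_msum F i I (s : seq I) (Q : pred I) (G : I -> M) : mlin F ->
  Lz F i (\sum_(j <- s | Q j) G j) = \sum_(j <- s | Q j) Lz F i (G j).
Proof. by move=> hF; apply: add_sum => ??; apply: LzD. Qed.

Lemma Lz_lA F i x m : mlin F -> bm_l x (Lz F i m) = Lz (fun m => F (bm_r m x)) i m.
Proof.
move=> hF; have hF' := mlin_comp x hF; move: m; apply: M_ext.
- by move=> a b; rewrite LzD // bm_lD.
- by move=> a b; rewrite LzD.
- by move=> a n; rewrite !LzE // LamR_lA.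
Qed.

Lemma Lz_rB F i m b' : mlin F -> bm_r (Lz F i m) b' = Lz F i (bm_r m (iota' b')).
Proof.
move=> hF; move: m; apply: M_ext.
- by move=> a b; rewrite LzD // bm_rD.
- by move=> a b; rewrite bm_rD LzD.
- by move=> a n; rewrite -btR !LzE // LamR_rB.
Qed.

Lemma Lz_la F i a m : mlin F -> Lz F i (bm_l a m) = Lz (fun m => F m * a) i m.
Proof.
move=> hF; have hF' := mlin_mulr a hF; move: m; apply: M_ext.
- by move=> x y; rewrite bm_lD LzD.
- by move=> x y; rewrite LzD.
- by move=> a0 n; rewrite -btL !LzE // bm_lM LamR_la.
Qed.

Lemma Lz_fsum I (s : seq I) (Q : pred I) (G : I -> M -> A) i m : (forall j, mlin (G j)) ->
  Lz (fun m => \sum_(j <- s | Q j) G j m) i m = \sum_(j <- s | Q j) Lz (G j) i m.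
Proof.
move=> hG; have hS := mlin_sum s Q hG; move: m; apply: M_ext.
- by move=> x y; rewrite LzD.
- by move=> x y; rewrite -big_split; apply: eq_bigr => j _; rewrite LzD.
- by move=> a n; rewrite LzE // LamR_fsum //; apply: eq_bigr => j _; rewrite LzE.
Qed.

Lemma RE F y m : mlin F -> bz (C F m) y = \sum_(i < nI) Lz F i (bm_r m (Psi (psr i) y)).
Proof.
move=> hF; move: m; apply: M_ext.
- by move=> a b; rewrite C_mD // rzD1.
- by move=> a b; rewrite -big_split; apply: eq_bigr => i _; rewrite bm_rD LzD.
- move=> a n; rewrite -[C F (bt a n)]/(Xr F a n) (G1 rzD1 rzB n y (xok_Xr a hF)) -/ThR.
  have H : forall m0, ThR (Xr F a) m0 = \sum_(i < nI) Lz F i (bm_l a (Phi (psr i) m0)).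
    apply: M_ext.
    - by move=> x y0; rewrite /ThR Th_mD //; apply: rzD2.
    - by move=> x y0; rewrite -big_split; apply: eq_bigr => i _; rewrite PhDr bm_lD LzD.
    - move=> w n0; rewrite -LamRE //.
      have -> : tnR a w = bm_l a (tnR 1 w).
        by case: (tens_bal (regbm idfun iota) (regbm iota iota)) => _ _ _ <- _; rewrite /= mulr1.
      rewrite R1 bm_l_sum LamR_tsum //; apply: eq_bigr => i _.
      by rewrite -bm_lM -LzE // PhEr -btL.
  by rewrite H; apply: eq_bigr => i _; rewrite PsSr.
Qed.

Definition zr i : Z := \sum_(k < nP) Lz (P k) i (mu k).

Lemma RF i x : \sum_(k < nP) Lz (fun m => P k (bm_r m x)) i (mu k) =
               \sum_(k < nP) Lz (P k) i (bm_r (mu k) x).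
Proof.
under [RHS]eq_bigr => k _ do rewrite -{1}(Pmu (bm_r (mu k) x)) (Lz_msum _ _ _ _ (mlin_P k)).
under [RHS]eq_bigr => k _ do under eq_bigr => k' _ do rewrite (Lz_la _ _ _ (mlin_P k)).
rewrite exchange_big /=; apply: eq_bigr => k' _.
rewrite -Lz_fsum; last by move=> k; apply: mlin_mulr; apply: mlin_P.
congr Lz; apply: funext => m.
rewrite -{1}(Pmu m) bm_r_sum (add_sum (PD k')); apply: eq_bigr => k _.
by rewrite -bm_lr PL.
Qed.

Lemma main_r (y : A') : bz 1 y = \sum_(i < nI) bm_l (Psi (psr i) y) (zr i).
Proof.
rewrite one_decomp (add_sum (f := fun x => bz x y)); last by move=> ??; apply: rzD1.
under eq_bigr => k _ do rewrite (RE _ _ (mlin_P k)).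
rewrite exchange_big /=; apply: eq_bigr => i _; rewrite /zr bm_l_sum.
under [RHS]eq_bigr => k _ do rewrite (Lz_lA _ _ _ (mlin_P k)).
by rewrite RF.
Qed.

Lemma central_r i b' : bm_r (zr i) b' = bm_l (iota' b') (zr i).
Proof.
rewrite /zr bm_l_sum bm_r_sum.
under eq_bigr => k _ do rewrite (Lz_rB _ _ _ (mlin_P k)).
under [RHS]eq_bigr => k _ do rewrite (Lz_lA _ _ _ (mlin_P k)).
by rewrite RF.
Qed.

Lemma zr_r i a b' : bm_l (a * iota' b') (zr i) = bm_r (bm_l a (zr i)) b'.
Proof. by rewrite bm_lM -central_r bm_lr. Qed.

Lemma right_div : bm_div Z (regbm idfun iota').
Proof.
pose gr i : regbm idfun iota' -> regbm iota' iota' -> regbm idfun iota' :=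
  fun x y => x * Psi (psr i) y.
have gr_bal i : balanced (gr i).
  split.
  - by move=> x x' y; rewrite /gr mulrDl.
  - by move=> x y y'; rewrite /gr (PsiD (psrD i) (psrL i) (psrR i)) mulrDr.
  - by move=> x s0 y; rewrite /gr /= (Psi_lB (psrD i) (psrL i) (psrR i)) mulrA.
  - by move=> r x y; rewrite /gr /= mulrA.
  - by move=> x y t; rewrite /gr /= (Psi_rB (psrD i) (psrL i) (psrR i)) mulrA.
pose fpr i : Z -> regbm idfun iota' :=
  pick (fun _ => 0) (fun h => bihom h /\ forall x y, h (bz x y) = gr i x y).
have fpr_spec i : bihom (fpr i) /\ forall x y, fpr i (bz x y) = gr i x y.
  rewrite /fpr; pickit; case: bzT => _ Hu; case: (Hu _ _ (gr_bal i)) => h [hb hE _].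
  by exists h.
exists nI, fpr, (fun i (a : regbm idfun iota') => bm_l a (zr i) : Z).
split.
- by move=> i; case: (fpr_spec i).
- move=> i; split.
  + by move=> x y; rewrite bm_Dl.
  + by move=> r x /=; rewrite bm_lM.
  + by move=> x t /=; rewrite zr_r.
- case: bzT => Hb Hu; case: (Hu Z bz Hb) => hh [_ _ Huniq] z.
  have e2 : z = hh z by apply: (Huniq id).
  rewrite {2}e2; apply: (Huniq (fun z => \sum_(i < nI) bm_l (fpr i z) (zr i))).
  + split.
    * move=> a b; rewrite -big_split; apply: eq_bigr => i _.
      by case: (fpr_spec i) => -[-> _ _] _; rewrite bm_Dl.
    * move=> r a; rewrite bm_l_sum; apply: eq_bigr => i _.
      by case: (fpr_spec i) => -[_ -> _] _; rewrite /= bm_lM.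
    * move=> a t; rewrite bm_r_sum; apply: eq_bigr => i _.
      by case: (fpr_spec i) => -[_ _ ->] _; rewrite /= zr_r.
  + move=> x y; under eq_bigr => i _ do rewrite (proj2 (fpr_spec i)) /gr bm_lM.
    by rewrite -bm_l_sum -main_r -rzL mulr1.
Qed.
End Right.
End Common.




Section Extract.
Variables (R T : pzRingType) (X : bimod R T).
Lemma dual1 : bm_div (leftmod X) (leftmod (regbm idfun idfun : bimod R R)) ->
  exists n (f : 'I_n -> X -> R) (e : 'I_n -> X),
    [/\ forall k x y, f k (x + y) = f k x + f k y,
        forall k r x, f k (bm_l r x) = r * f k x
      & forall x, \sum_(k < n) bm_l (f k x) (e k) = x].
Proof.
move=> [n [f [g [fh gh fg]]]]; exists n, f, (fun k => g k 1); split.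
- by move=> k; case: (fh k).
- by move=> k r x; case: (fh k) => _ H _; have := H r x; rewrite /=.
- move=> x; rewrite -{2}(fg x); apply: eq_bigr => k _.
  case: (gh k) => _ H _; have := H (f k x) 1; rewrite /= mulr1 => <-; done.
Qed.

Lemma dual2 : bm_div (leftmod (regbm idfun idfun : bimod R R)) (leftmod X) ->
  exists n (v : 'I_n -> X -> R) (e : 'I_n -> X),
    [/\ forall k x y, v k (x + y) = v k x + v k y,
        forall k r x, v k (bm_l r x) = r * v k x
      & \sum_(k < n) v k (e k) = 1].
Proof.
move=> [n [f [g [fh gh fg]]]]; exists n, g, (fun k => f k 1); split.
- by move=> k; case: (gh k).
- by move=> k r x; case: (gh k) => _ H _; have := H r x; rewrite /=.
- exact: fg.
Qed.
End Extract.

Theorem theorem3p3 (B A : pzRingType) (iota : {rmorphism B -> A})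
  (B' A' : pzRingType) (iota' : {rmorphism B' -> A'}) :
  ring_ext iota -> ring_ext iota' -> morita_equiv iota iota' ->
  (left_D2 iota -> left_D2 iota') /\ (right_D2 iota -> right_D2 iota').
Proof.
move=> _ _ [M [N [[[MS1 MS2] Mf Mfull] [[NS1 NS2] Nf Nfull] [bt btT]]]].
pose bt' : A -> N -> M := bt.
have [btInd btLift] := tensor_props btT.
case: (btT) => -[b1 b2 b3 b4 b5] _.
have btD1 : forall (a a' : A) (n : N), bt' (a + a') n = bt' a n + bt' a' n by exact: b1.
have btD2 : forall (a : A) (n n' : N), bt' a (n + n') = bt' a n + bt' a n' by exact: b2.
have btB : forall (a : A) (b : B) (n : N), bt' (a * iota b) n = bt' a (bm_l b n) by exact: b3.
have btL : forall (a0 a : A) (n : N), bt' (a0 * a) n = bm_l a0 (bt' a n) by exact: b4.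
have btR : forall (a : A) (n : N) (b' : B'), bt' a (bm_r n b') = bm_r (bt' a n) (iota' b') by exact: b5.
have M_ind : forall P : M -> Prop, P 0 -> (forall x y : M, P x -> P y -> P (x + y)) ->
   (forall (a : A) (n : N), P (bt' a n)) -> forall m : M, P m by exact: btInd.
have M_lift : forall (W : zmodType) (g : A -> N -> W),
  (forall (a a' : A) (n : N), g (a + a') n = g a n + g a' n) ->
  (forall (a : A) (n n' : N), g a (n + n') = g a n + g a n') ->
  (forall (a : A) (b : B) (n : N), g (a * iota b) n = g a (bm_l b n)) ->
  exists G : M -> W, (forall x y : M, G (x + y) = G x + G y) /\
   (forall (a : A) (n : N), G (bt' a n) = g a n).
  by move=> W g g1 g2 g3; apply: btLift; split.
have [nL [v [mv [vD vL vmv]]]] := dual2 NS2.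
have [nK [p [nb [pD pL pnb]]]] := dual1 NS1.
have [nP [P [mu [PD PL Pmu]]]] := dual1 MS1.
split.
- move=> HL Z bz bzT.
  have := HL _ _ (tens_is_tensor (regbm iota iota) (regbm iota idfun)).
  move=> [nI [fi [gi [fih gih fgi]]]].
  exact: (left_div btD1 btD2 btB btL btR M_ind M_lift Mf Mfull Nfull vD vL vmv pD pL pnb fih gih fgi bzT).
- move=> HR Z bz bzT.
  have := HR _ _ (tens_is_tensor (regbm idfun iota) (regbm iota iota)).
  move=> [nI [fi [gi [fih gih fgi]]]].
  exact: (right_div btD1 btD2 btB btL btR M_ind M_lift Mf Mfull Nfull vD vL vmv PD PL Pmu fih gih fgi bzT).
Qed.
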